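(* Let $X$ be a $0$-dimensional space. Then every compact subset of $(\mathbb T^{(X)},t_c(C(X,\mathbb Z)))$ has finite support, i.e. if $D\subseteq\mathbb T^{(X)}$ is compact then $\bigcup_{w\in D}\operatorname{supp}w$ is finite.
   Context: Spaces are Tikhonov; $0$-dimensional means having a base of clopen sets. $C(X,\mathbb Z)$ is the group of continuous functions $X\to\mathbb Z$ ($\mathbb Z$ discrete); $C_p(X,\mathbb Z)$ is this group with the topology of pointwise convergence. $\mathbb T$ is the circle group. $\mathbb T^{(X)}$ is the group of finitely supported families $w=(t_x)_{x\in X}$ with $t_x\in\mathbb T$; each such $w$ acts as a character of $C_p(X,\mathbb Z)$ by $f\mapsto\prod_x t_x^{f(x)}$ (multiplicative notation), and this identifies $\mathbb T^{(X)}$ with the dual group of $C_p(X,\mathbb Z)$. $t_c(C(X,\mathbb Z))$ denotes the compact-open topology on $\mathbb T^{(X)}$, i.e. uniform convergence on compact subsets of $C_p(X,\mathbb Z)$. The support of $w=(t_x)$ is $\operatorname{supp}w=\{x\in X:t_x\neq1\}$. *)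

(* Defs.v *)
From HB Require Import structures.
From mathcomp Require Import all_boot all_order all_algebra.
From mathcomp Require Import all_classical all_reals all_analysis.
Set Implicit Arguments. Unset Strict Implicit. Unset Printing Implicit Defensive.
Import Order.TTheory GRing.Theory Num.Theory.
Local Open Scope classical_set_scope.
Local Open Scope ring_scope.

Definition clopen_base (X : topologicalType) : Prop :=
  forall (x : X) (U : set X), open U -> U x ->
    exists V : set X, [/\ clopen V, V x & V `<=` U].

(* Z with the discrete topology; C_p(X,Z) lives in {ptws X -> Zd}. *)
Definition Zd := discrete_topology int.

Definition in_CXZ (X : topologicalType) (f : {ptws X -> Zd}) : Prop :=
  continuous (f : X -> Zd).

Definition Cp_compact (X : topologicalType) (K : set {ptws X -> Zd}) : Prop :=
  K `<=` in_CXZ (X:=X) /\ compact K.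

(* The circle group T = R/Z, represented by the unique representative in [0,1);
   additively written, so the unit 1 of T corresponds to 0. *)
Definition circle (R : realType) := {t : R | (0 <= t) && (t < 1)}.

(* distance in T = R/Z between the classes of a and b: distance of a - b to Z *)
Definition Tdist (R : realType) (a b : R) : R :=
  Num.min ((a - b) - (Num.floor (a - b))%:~R) ((Num.ceil (a - b))%:~R - (a - b)).

Definition supp (R : realType) (X : Type) (w : X -> circle R) : set X :=
  [set x | sval (w x) != 0].

Definition finsupp (R : realType) (X : Type) (w : X -> circle R) : Prop :=
  finite_set (supp w).

(* value of the character w at f, as a real representative of an element of T:
   prod_x t_x^{f(x)} in multiplicative notation = sum_x t_x f(x) mod 1 *)
Definition charval (R : realType) (X : choiceType) (w : X -> circle R)
  (f : X -> int) : R :=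
  (\sum_(x \in supp w) sval (w x) * (f x)%:~R)%R.

(* basic neighbourhood of w in t_c(C(X,Z)): uniform closeness on compact K *)
Definition tc_ball (R : realType) (X : topologicalType)
  (K : set {ptws X -> Zd}) (eps : R) (w v : X -> circle R) : Prop :=
  forall f : {ptws X -> Zd}, K f -> Tdist (charval v f) (charval w f) < eps.

(* open sets of (T^(X), t_c(C(X,Z))), as subsets of the ambient type;
   only their traces on finitely supported families matter *)
Definition tc_open (R : realType) (X : topologicalType)
  (U : set (X -> circle R)) : Prop :=
  forall w, finsupp w -> U w ->
    exists (K : set {ptws X -> Zd}) (eps : R),
      [/\ Cp_compact K, 0 < eps &
          forall v, finsupp v -> tc_ball K eps w v -> U v].

Definition tc_compact (R : realType) (X : topologicalType)
  (D : set (X -> circle R)) : Prop :=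
  D `<=` finsupp (R:=R) (X:=X) /\
  forall (I : Type) (U : I -> set (X -> circle R)),
    (forall i, tc_open (U i)) -> D `<=` \bigcup_i U i ->
    exists2 J : set I, finite_set J & D `<=` \bigcup_(i in J) U i.

(* Main.v *)
Require Import Defs.
From mathcomp Require Import all_boot all_order all_algebra.
From mathcomp Require Import all_classical all_reals all_analysis.
From mathcomp Require Import ring lra.
Set Implicit Arguments. Unset Strict Implicit. Unset Printing Implicit Defensive.
Import Order.TTheory GRing.Theory Num.Theory.
Local Open Scope classical_set_scope.
Local Open Scope ring_scope.


Section Arith.
Variable R : realType.
Definition dz (x : R) : R := Num.min (x - (Num.floor x)%:~R) ((Num.ceil x)%:~R - x).

Lemma TdistE (a b : R) : Tdist a b = dz (a - b). Proof. by []. Qed.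

Lemma dz_le (x : R) (k : int) : dz x <= `|x - k%:~R|.
Proof.
rewrite /dz; have [kl|kg] := lerP k (Num.floor x).
  have h1 : (k%:~R : R) <= (Num.floor x)%:~R by rewrite ler_int.
  have h2 := floor_le x.
  rewrite ger0_norm ?subr_ge0; last lra.
  rewrite ge_min; apply/orP; left; lra.
have h : Num.ceil x <= k.
  rewrite ceil_floor; move: kg; rewrite -lezD1 => kg.
  by apply: le_trans kg; rewrite lerD2l; case: (x \isn't a Num.int_num).
have h1 : (Num.ceil x)%:~R <= (k%:~R : R) by rewrite ler_int.
have h2 := ceil_ge x.
rewrite ler0_norm ?subr_le0; last lra.
rewrite ge_min; apply/orP; right; lra.
Qed.

Lemma dz_att (x : R) : exists k : int, dz x = `|x - k%:~R|.
Proof.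
rewrite /dz; have h1 := floor_le x; have h2 := ceil_ge x.
case: (leP (x - (Num.floor x)%:~R) ((Num.ceil x)%:~R - x)) => _.
  by exists (Num.floor x); rewrite ger0_norm // subr_ge0.
by exists (Num.ceil x); rewrite ler0_norm ?opprB // subr_le0.
Qed.

Lemma dz_tri (x y : R) : dz (x + y) <= dz x + dz y.
Proof.
have [kx ->] := dz_att x; have [ky ->] := dz_att y.
apply: le_trans (dz_le _ (kx + ky)) _.
rewrite intrD; have -> : x + y - (kx%:~R + ky%:~R) = (x - kx%:~R) + (y - ky%:~R) by ring.
exact: ler_normD.
Qed.

Lemma dz0 : dz 0 = 0.
Proof. by rewrite /dz floor0 ceil0 !subrr minxx. Qed.

Lemma dz_lb (x : R) (k : int) : k%:~R + 1/4 <= x -> x <= k%:~R + 3/4 -> 1/4 <= dz x.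
Proof.
move=> h1 h2; have [k' ->] := dz_att x.
have [kl|kg] := lerP k' k.
  have : (k'%:~R : R) <= k%:~R by rewrite ler_int.
  move=> h; rewrite ger0_norm; lra.
have : (k%:~R : R) + 1 <= k'%:~R by rewrite -(intrD1) ler_int -lezD1 in kg *.
move=> h; rewrite ler0_norm; lra.
Qed.

Lemma exists_m (t : R) : 0 < t < 1 ->
  exists m k : int, k%:~R + 1/4 <= m%:~R * t /\ m%:~R * t <= k%:~R + 3/4.
Proof.
have small : forall s : R, 0 < s -> s <= 1/2 ->
    exists m : int, 1/4 <= m%:~R * s /\ m%:~R * s <= 3/4.
  move=> s s0 s2; exists (Num.floor (1/(4*s)) + 1).
  have a1 := floor_le (1/(4*s)); have a2 := floorD1_gt (1/(4*s)).
  rewrite intrD /= in a2 *.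
  set f := (Num.floor (1 / (4 * s)))%:~R in a1 a2 *.
  have e : 1/(4*s) * s = 1/4 by field; lra.
  have b1 : f * s <= 1/4 by rewrite -e; apply: ler_wpM2r => //; exact: ltW.
  have b2 : 1/4 < (f + 1) * s by rewrite -e ltr_pM2r.
  split; lra.
move=> /andP[t0 t1]; have [th|th] := lerP t (1/2).
  have [m [h1 h2]] := small t t0 th; exists m; exists 0; by rewrite mulr0z !add0r.
have u1 : 0 < 1 - t by lra.
have u2 : 1 - t <= 1/2 by lra.
have [m [h1 h2]] := small (1 - t) u1 u2.
exists (- m), (- m); rewrite !intrN mulNr; lra.
Qed.
End Arith.

Lemma fin_ind T (P : set T -> Prop) : P set0 ->
  (forall A x, A x -> P (A `\ x) -> P A) -> forall A, finite_set A -> P A.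
Proof.
move=> P0 PS A /finite_setP[n]; elim: n A => [A|n ih A /eq_cardSP[x Ax /ih h]].
  by rewrite II0 card_eq0 => /eqP ->.
exact: PS Ax h.
Qed.

Lemma unif_bound T (F : set T) (Q : T -> nat -> Prop) : finite_set F ->
  (forall x, F x -> exists N, forall n, (N <= n)%N -> Q x n) ->
  exists N, forall x, F x -> forall n, (N <= n)%N -> Q x n.
Proof.
move=> fF; elim/fin_ind: F / fF.
  by move=> _; exists 0%N.
move=> A x Ax ih h.
have [N1 h1] : exists N, forall y, (A `\ x) y -> forall n, (N <= n)%N -> Q y n.
  by apply: ih => y [Ay _]; exact: h.
have [N2 h2] := h x Ax.
exists (maxn N1 N2) => y Ay n Nn.
have [->|yx] := pselect (y = x); first by apply: h2; apply: leq_trans Nn; exact: leq_maxr.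
by apply: h1; [split|apply: leq_trans Nn; exact: leq_maxl].
Qed.

Section Topo.
Variable X : topologicalType.
Hypothesis hX : hausdorff_space X.
Hypothesis zX : clopen_base X.

Lemma sep (a b : X) : a <> b -> exists V, [/\ clopen V, V a & ~ V b].
Proof.
move=> ab.
have : ~ cluster (nbhs a) b by move=> /hX.
move=> /existsNP[A /existsNP[B /not_implyP[nA /not_implyP[nB AB]]]].
have [V [cV Va VA]] := zX (open_interior A) nA.
exists V; split => // Vb; apply: AB; exists b; split.
  exact: interior_subset (VA _ Vb).
exact: nbhs_singleton.
Qed.

Lemma sep_fin (F : set X) (y : X) : finite_set F ->
  exists W, [/\ clopen W, W y & forall z, F z -> z <> y -> ~ W z].
Proof.
move=> fF; elim/fin_ind: F / fF.
  by exists setT; split => //; exact: clopenT.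
move=> A x Ax [W [cW Wy hW]].
have [exy|xy] := pselect (x = y).
  by exists W; split => // z Az zy; apply: hW => //; split => //; rewrite exy.
have [V [cV Vy Vx]] := sep (nesym xy).
exists (W `&` V); split => //; first exact: clopenI.
move=> z Az zy [Wz Vz]; have [ezx|zx] := pselect (z = x); first by rewrite ezx in Vz.
by apply: (hW z) => //; split.
Qed.

End Topo.

Section Step.
Variables (R : realType) (X : topologicalType).
Hypothesis hX : hausdorff_space X.
Hypothesis zX : clopen_base X.
Variable D : set (X -> circle R).
Hypothesis hD : D `<=` finsupp (R:=R) (X:=X).
Let S := \bigcup_(w in D) supp w.

Record good (C C' U : set X) (y : X) (w : X -> circle R) : Prop := Good {
  g_cC' : clopen C'; g_inf : infinite_set (C' `&` S); g_sub : C' `<=` C;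
  g_cU : clopen U; g_U : U `<=` C; g_dis : forall x, U x -> ~ C' x;
  g_y : U y; g_D : D w; g_supp : supp w y;
  g_uniq : forall z, U z -> supp w z -> z = y }.

Lemma finish (C C' Q : set X) (p : X) : clopen C' -> infinite_set (C' `&` S) ->
  C' `<=` C -> clopen Q -> Q `<=` C -> (forall x, Q x -> ~ C' x) -> Q p -> S p ->
  exists U y w, good C C' U y w.
Proof.
move=> cC' iC' sC' cQ sQ dQ Qp [w Dw swp].
have [W [cW Wp hW]] := sep_fin hX zX p (hD Dw).
exists (Q `&` W), p, w; split => //.
- exact: clopenI.
- by move=> x [Qx _]; exact: sQ.
- by move=> x [Qx _]; exact: dQ.
- by move=> z [Qz Wz] sz; apply: contrapT => zp; exact: hW sz zp Wz.
Qed.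

Lemma step (C : set X) : clopen C -> infinite_set (C `&` S) ->
  exists C' U y w, good C C' U y w.
Proof.
move=> cC iC.
have [a [Ca Sa]] := infinite_setN0 iC.
have iC1 : infinite_set ((C `&` S) `\ a).
  move=> fin; apply: iC.
  have fu : finite_set (((C `&` S) `\ a) `|` [set a]) by rewrite finite_setU; split => //; exact: finite_set1.
  apply: sub_finite_set fu.
  by move=> x Cx; have [->|xa] := pselect (x = a); [right|left].
have [b [[Cb Sb] ba]] := infinite_setN0 iC1.
have [V [cV Va Vb]] := sep hX zX (nesym ba).
have [fin|inf] := pselect (finite_set (C `&` V `&` S)).
  have inf : infinite_set ((C `&` ~` V) `&` S).
    move=> fin2; apply: iC.
    have fu : finite_set ((C `&` V `&` S) `|` ((C `&` ~` V) `&` S)) by rewrite finite_setU.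
    apply: sub_finite_set fu.
    by move=> x [Cx Sx]; have [Vx|Vx] := pselect (V x); [left|right].
  have [U [y [w g]]] : exists U y w, good C (C `&` ~` V) U y w.
    apply: (@finish C _ (C `&` V) a); try done.
    all: try first [by apply: clopenI => //; apply: clopenC | by apply: clopenI | by move=> x [] | by move=> x [_ Vx] [_ nVx] | by split ].
  by exists (C `&` ~` V), U, y, w.
have [U [y [w g]]] : exists U y w, good C (C `&` V) U y w.
  apply: (@finish C _ (C `&` ~` V) b); try done.
  all: try first [by apply: clopenI => //; apply: clopenC | by apply: clopenI | by move=> x [] | by move=> x [_ Vx] [_ nVx] | by split ].
by exists (C `&` V), U, y, w.
Qed.
End Step.

Section Cpt.
Variable X : topologicalType.

Definition ind (U : set X) (m : int) : {ptws X -> Zd} :=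
  fun x => if `[< U x >] then m else 0.

Lemma ind_cont U m : clopen U -> in_CXZ (ind U m).
Proof.
move=> [oU cU] x; apply/discrete_cvg.
have [Ux|nUx] := pselect (U x).
  have : nbhs x U by apply: open_nbhs_nbhs; split.
  apply: filterS => z Uz /=; rewrite /ind.
  by rewrite !asboolT.
have : nbhs x (~` U) by apply: open_nbhs_nbhs; split => //; exact: closed_openC.
apply: filterS => z Uz /=; rewrite /ind.
by rewrite !asboolF.
Qed.

Lemma seq_compact (f : nat -> {ptws X -> Zd}) (f0 : {ptws X -> Zd}) :
  (forall x, exists N, forall n, (N <= n)%N -> f n x = f0 x) ->
  compact ([set f0] `|` range f).
Proof.
move=> conv F PF FK.
have [cl|ncl] := pselect (cluster F f0); first by exists f0; split => //; left.
move: ncl => /existsNP[A /existsNP[B /not_implyP[FA /not_implyP[nB AB]]]].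
have cv : (f @ \oo) --> f0.
  apply/pointwise_cvgP => t; apply/discrete_cvg.
  by have [N hN] := conv t; exists N => // n /= Nn; rewrite hN.
have [N _ hN] := cv B nB.
have fin : finite_set (A `&` ([set f0] `|` range f)).
  apply: sub_finite_set (finite_image f (finite_II N)).
  move=> g [Ag [gf|[n _ fn]]].
    by exfalso; apply: AB; exists f0; split; [rewrite -gf | exact: nbhs_singleton nB].
  exists n => //; rewrite /= ltnNge; apply/negP => Nn.
  by apply: AB; exists g; split => //; rewrite -fn; apply: hN.
have := finite_compact fin; move=> /(_ F PF (filterI FA FK)) [g [[Ag Kg] clg]].
by exists g.
Qed.
End Cpt.
Unset Implicit Arguments.

Theorem lemma6p4 (R : realType) (X : topologicalType)
  (hX : hausdorff_space X) (zX : clopen_base X)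
  (D : set (X -> circle R)) :
  tc_compact D -> finite_set (\bigcup_(w in D) supp w).
Proof.
move=> [hD cD]; apply: contrapT => iS.
set S := \bigcup_(w in D) supp w in iS.
have [x0 [w0 Dw0 _]] := infinite_setN0 iS.
have gex : forall C : set X, exists p : set X * set X * X * (X -> circle R),
    (clopen C /\ infinite_set (C `&` S)) -> good D C p.1.1.1 p.1.1.2 p.1.2 p.2.
  move=> C; have [[cC iC]|nI] := pselect (clopen C /\ infinite_set (C `&` S)).
    have [C' [U [y [w g]]]] := step hX zX hD cC iC.
    by exists (C', U, y, w) => _.
  by exists (set0, set0, x0, w0).
have [g hg] := choice gex.
pose Cs n := iter n (fun C => (g C).1.1.1) setT.
have inv : forall n, clopen (Cs n) /\ infinite_set (Cs n `&` S).
  elim => [|n [cn iN]]; first by split; [exact: clopenT | rewrite setTI].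
  by case: (hg (Cs n) (conj cn iN)).
pose U n := (g (Cs n)).1.1.2.
pose y n := (g (Cs n)).1.2.
pose w n := (g (Cs n)).2.
have G n : good D (Cs n) (Cs n.+1) (U n) (y n) (w n) := hg _ (inv n).
have dec : forall n k, Cs (k + n)%N `<=` Cs n.
  move=> n; elim => [|k ih] //= x hx; apply: ih.
  exact: (g_sub (G (k + n)%N)).
have E : forall x, exists N, forall n, (N <= n)%N -> ~ U n x.
  move=> x; have [[k nk]|allk] := pselect (exists k, ~ Cs k x).
    exists k => n kn Unx; apply: nk; have := dec k (n - k)%N; rewrite subnK //.
    by apply; exact: (g_U (G n) Unx).
  exists 0%N => n _ Unx; apply: (g_dis (G n) Unx); apply: contrapT => h.
  by apply: allk; exists n.+1.
pose t n := sval (w n (y n)).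
have tP : forall n, 0 < t n < 1.
  move=> n; have := svalP (w n (y n)); rewrite /t => /andP[h1 h2].
  have := g_supp (G n); rewrite /supp /= => h3.
  by rewrite h2 andbT lt0r h3.
have [mm hmm] := choice (fun n => exists_m (tP n)).
pose fs n := ind (U n) (mm n).
pose f0 := ind (@set0 X) 0.
pose K := [set f0] `|` range fs.
have cK : Cp_compact K.
  split.
    move=> h [->|[n _ <-]]; apply: ind_cont; first exact: clopen0.
    exact: (g_cU (G n)).
  apply: seq_compact => x; have [N hN] := E x; exists N => n Nn.
  rewrite /fs /f0 /ind /=; have nU := hN n Nn.
  by case: asboolP => [/nU|_]; case: asboolP.
pose Ui (v : X -> circle R) : set (X -> circle R) := [set u | finsupp v /\
  exists2 e : R, 0 < e & forall h, K h -> Tdist (charval u h) (charval v h) < 1/8 - e].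
have [] := cD _ Ui.
- move=> v u fu [fv [e e0 he]]; exists K, (e/2); split => //; first lra.
  move=> u' fu' hb; split => //; exists (e/2); first lra.
  move=> h Kh; have := hb h Kh; have := he h Kh; rewrite !TdistE => h1 h2.
  have := dz_tri (charval u' h - charval u h) (charval u h - charval v h).
  have -> : charval u' h - charval u h + (charval u h - charval v h) =
    charval u' h - charval v h by ring.
  lra.
- move=> u Du; exists u => //; split; first exact: hD.
  exists (1/16); first lra.
  by move=> h Kh; rewrite TdistE subrr dz0; lra.
move=> J fJ cov.
pose F := \bigcup_(v in J `&` finsupp (R:=R) (X:=X)) supp v.
have fF : finite_set F.
  by apply: bigcup_finite; [exact: finite_setIl | move=> v [_ fv]].
have [N hN] := unif_bound (Q := fun x n => ~ U n x) fF (fun x _ => E x).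
have Dw := g_D (G N).
have [v Jv [fv [e e0 he]]] := cov _ Dw.
have := he (fs N) (or_intror (ex_intro2 _ _ N I erefl)).
have -> : charval v (fs N) = 0.
  rewrite /charval fsbig1 // => x sx.
  rewrite /fs /ind asboolF ?mulr0 //.
  by apply: (hN x _ N (leqnn N)); exists v.
have -> : charval (w N) (fs N) = t N * (mm N)%:~R.
  rewrite /charval (fsbigD1 (y N)) //=; last exact: (g_supp (G N)).
    rewrite fsbig1 ?addr0; first by rewrite /fs /ind asboolT //; exact: (g_y (G N)).
    move=> x [sx xy]; rewrite /fs /ind asboolF ?mulr0 // => Ux.
    by apply: xy; exact: (g_uniq (G N)).
  by have := hD _ Dw.
have [k [hk1 hk2]] := hmm N.
rewrite [_ * t N]mulrC in hk1 hk2.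
have := dz_lb hk1 hk2.
rewrite TdistE subr0; lra.
Qed.
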